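(* Let $A\in\mathbb{R}^{n\times n}$, let $s$ be an integer with $1\leq s<d(A)$, and let $v_0\in\mathbb{R}^n$ with $\|v_0\|=1$ and $d(A,v_0)\geq s+1$. Then the normalized vectors of the Arnoldi cross iteration ACI($s$) started at $v_0$ satisfy $$\lim_{k\to\infty}\|w_{k+1}-w_k\|=0\quad\text{and}\quad\lim_{k\to\infty}\|v_{k+1}-v_k\|=0.$$
   Context: Notation: for $A\in\mathbb{R}^{n\times n}$, $d(A)$ is the degree of the minimal polynomial of $A$, $d(A,v)$ is the grade of $v$ w.r.t. $A$ (degree of the monic polynomial $p$ of smallest degree with $p(A)v=0$), $\mathcal{K}_k(A,v)=\mathrm{span}\{v,Av,\dots,A^{k-1}v\}$, $\mathcal{M}_s$ is the set of real monic polynomials of degree $s$, and $\|\cdot\|$ is the Euclidean norm. For a matrix $B$ and a vector $u$ with $d(B,u)\geq s$, let $P_s(\cdot\,;u)\in\mathcal{M}_s$ (determined with respect to $B$) be the unique monic polynomial with $P_s(B;u)u\perp\mathcal{K}_s(B,u)$. The Arnoldi cross iteration ACI($s$) started at $v_0$ is: for $k=0,1,2,\dots$: $\widetilde w_k=P_s(A;v_k)v_k$ (w.r.t. $A$), $w_k=\widetilde w_k/\|\widetilde w_k\|$, $\widetilde v_{k+1}=P_s(A^T;w_k)w_k$ (w.r.t. $A^T$), $v_{k+1}=\widetilde v_{k+1}/\|\widetilde v_{k+1}\|$. (Under the stated hypotheses all these vectors are nonzero.) *)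

(* Defs.v *)
From HB Require Import structures.
From mathcomp Require Import all_boot all_order all_algebra.
From mathcomp Require Import all_classical all_reals all_analysis.
Set Implicit Arguments. Unset Strict Implicit. Unset Printing Implicit Defensive.
Import Order.TTheory GRing.Theory Num.Theory.
Local Open Scope ring_scope.

Section ACI.
Variables (R : realType) (n : nat).

Definition polyapply {m : nat} (p : {poly R}) (A : 'M[R]_n) (X : 'M[R]_(n, m))
  : 'M[R]_(n, m) :=
  \sum_(i < size p) p`_i *: iter i (mulmx A) X.

Definition annihilated_deg {m : nat} (A : 'M[R]_n) (X : 'M[R]_(n, m)) (k : nat) : Prop :=
  exists p : {poly R}, [/\ p \is monic, size p = k.+1 & polyapply p A X = 0].

(* smallest such degree (0 if none, which cannot occur) *)
Definition min_annih_deg {m : nat} (A : 'M[R]_n) (X : 'M[R]_(n, m)) : nat :=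
  match pselect (exists k, `[< annihilated_deg A X k >]) with
  | left e => ex_minn e
  | right _ => 0%N
  end.

Definition minpoly_deg (A : 'M[R]_n) : nat := min_annih_deg A (1%:M : 'M[R]_n).

Definition grade (A : 'M[R]_n) (v : 'cV[R]_n) : nat := min_annih_deg A v.

Definition dotv (u w : 'cV[R]_n) : R := (u^T *m w) 0 0.
Definition enorm (u : 'cV[R]_n) : R := Num.sqrt (dotv u u).

Definition orth_krylov (B : 'M[R]_n) (s : nat) (u x : 'cV[R]_n) : Prop :=
  forall j : nat, (j < s)%N -> dotv (iter j (mulmx B) u) x = 0.

Definition is_Ps (B : 'M[R]_n) (s : nat) (u : 'cV[R]_n) (p : {poly R}) : Prop :=
  [/\ p \is monic, size p = s.+1 & orth_krylov B s u (polyapply p B u)].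

(* P_s(.;u) w.r.t. B (the unique such polynomial when d(B,u) >= s) *)
Definition Ps (B : 'M[R]_n) (s : nat) (u : 'cV[R]_n) : {poly R} :=
  match pselect (exists p, is_Ps B s u p) with
  | left e => proj1_sig (cid e)
  | right _ => 0
  end.

Definition normalize (x : 'cV[R]_n) : 'cV[R]_n := (enorm x)^-1 *: x.

Fixpoint aci_v (A : 'M[R]_n) (s : nat) (v0 : 'cV[R]_n) (k : nat) : 'cV[R]_n :=
  match k with
  | 0%N => v0
  | k'.+1 =>
      let v := aci_v A s v0 k' in
      let w := normalize (polyapply (Ps A s v) A v) in
      normalize (polyapply (Ps A^T s w) A^T w)
  end.

Definition aci_w (A : 'M[R]_n) (s : nat) (v0 : 'cV[R]_n) (k : nat) : 'cV[R]_n :=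
  let v := aci_v A s v0 k in
  normalize (polyapply (Ps A s v) A v).

End ACI.

(* Main.v *)
Require Import Defs.
From HB Require Import structures.
From mathcomp Require Import all_boot all_order all_algebra.
From mathcomp Require Import all_classical all_reals all_analysis.
From mathcomp Require Import ring lra zify.
Import Order.TTheory GRing.Theory Num.Theory.
Import numFieldNormedType.Exports.
Local Open Scope classical_set_scope.
Local Open Scope ring_scope.
Set Implicit Arguments. Unset Strict Implicit.
Section Aux.
Variables (R : realType) (n : nat).
Implicit Types (u w x y : 'cV[R]_n) (B : 'M[R]_n).

Lemma dotvE u w : dotv u w = \sum_i u i 0 * w i 0.
Proof. by rewrite /dotv mxE; apply: eq_bigr => i _; rewrite mxE. Qed.

Lemma dotvC u w : dotv u w = dotv w u.
Proof. by rewrite !dotvE; apply: eq_bigr => i _; rewrite mulrC. Qed.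

Lemma dotvDr u w x : dotv u (w + x) = dotv u w + dotv u x.
Proof. by rewrite !dotvE -big_split; apply: eq_bigr => i _; rewrite mxE mulrDr. Qed.

Lemma dotvNr u w : dotv u (- w) = - dotv u w.
Proof. by rewrite !dotvE -sumrN; apply: eq_bigr => i _; rewrite mxE mulrN. Qed.

Lemma dotvBr u w x : dotv u (w - x) = dotv u w - dotv u x.
Proof. by rewrite dotvDr dotvNr. Qed.

Lemma dotvZr u (c : R) w : dotv u (c *: w) = c * dotv u w.
Proof. by rewrite !dotvE mulr_sumr; apply: eq_bigr => i _; rewrite mxE mulrCA. Qed.

Lemma dotvZl u (c : R) w : dotv (c *: u) w = c * dotv u w.
Proof. by rewrite dotvC dotvZr dotvC. Qed.

Lemma dotvDl u w x : dotv (w + x) u = dotv w u + dotv x u.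
Proof. by rewrite dotvC dotvDr !(dotvC u). Qed.

Lemma dotvBl u w x : dotv (w - x) u = dotv w u - dotv x u.
Proof. by rewrite dotvC dotvBr !(dotvC u). Qed.

Lemma dotv_sumr u (I : finType) (F : I -> 'cV[R]_n) :
  dotv u (\sum_i F i) = \sum_i dotv u (F i).
Proof.
elim/big_rec2: _ => [|i y1 y2 _ <-]; last by rewrite dotvDr.
by rewrite !dotvE big1 // => i _; rewrite mxE mulr0.
Qed.

Lemma dotv0r u : dotv u 0 = 0.
Proof. by rewrite dotvE big1 // => i _; rewrite mxE mulr0. Qed.

Lemma dotv_ge0 u : 0 <= dotv u u.
Proof. by rewrite dotvE sumr_ge0 // => i _; rewrite -expr2 sqr_ge0. Qed.

Lemma dotv_eq0 u : dotv u u = 0 -> u = 0.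
Proof.
rewrite dotvE => H; apply/matrixP => i j; rewrite (ord1 j) mxE.
have Hp : forall k, predT k -> 0 <= u k 0 * u k 0 by move=> k _; rewrite -expr2 sqr_ge0.
have /eqP := psumr_eq0P Hp H (isT : predT i).
by rewrite mulf_eq0 orbb => /eqP.
Qed.

Lemma enorm_sq u : enorm u ^+ 2 = dotv u u.
Proof. by rewrite /enorm sqr_sqrtr // dotv_ge0. Qed.

Lemma enorm_ge0 u : 0 <= enorm u.
Proof. exact: sqrtr_ge0. Qed.

Lemma enorm_eq0 u : enorm u = 0 -> u = 0.
Proof. by move=> H; apply: dotv_eq0; rewrite -enorm_sq H expr0n. Qed.

Lemma normalizeK x : enorm x *: normalize x = x.
Proof.
rewrite /normalize scalerA; have [H|H] := eqVneq (enorm x) 0.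
  by rewrite (enorm_eq0 H) scaler0.
by rewrite mulfV // scale1r.
Qed.

Lemma dotv_normalize x : dotv (normalize x) x = enorm x.
Proof.
rewrite /normalize dotvZl -enorm_sq; have [H|H] := eqVneq (enorm x) 0.
  by rewrite H invr0 mul0r.
by rewrite expr2 mulrA mulVf ?mul1r.
Qed.

Lemma dotv_normalize_self x :
  dotv (normalize x) (normalize x) = if enorm x == 0 then 0 else 1.
Proof.
rewrite /normalize dotvZl dotvZr -enorm_sq; case: eqP => [->|/eqP H].
  by rewrite invr0 mul0r.
by field.
Qed.

Lemma dotv_normalize_le1 x : dotv (normalize x) (normalize x) <= 1.
Proof. by rewrite dotv_normalize_self; case: ifP. Qed.

Lemma dotv_le1 u w : dotv u u <= 1 -> dotv w w <= 1 -> dotv u w <= 1.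
Proof.
move=> Hu Hw; have := dotv_ge0 (u - w).
rewrite dotvBl !dotvBr (dotvC w u) => H; lra.
Qed.

Lemma dist_sq u w : dotv (u - w) (u - w) = dotv u u + dotv w w - 2 * dotv u w.
Proof. rewrite dotvBl !dotvBr (dotvC w u); ring. Qed.

Lemma dotv_mul B w x : dotv w (B *m x) = dotv (B^T *m w) x.
Proof. by rewrite /dotv trmx_mul trmxK mulmxA. Qed.

Lemma dotv_iter B i w x :
  dotv w (iter i (mulmx B) x) = dotv (iter i (mulmx B^T) w) x.
Proof.
elim: i w => [//|i IH] w.
by rewrite iterS dotv_mul IH -iterSr.
Qed.

Lemma dotv_polyapply (p : {poly R}) B w x :
  dotv w (polyapply p B x) = dotv (polyapply p B^T w) x.
Proof.
rewrite /polyapply dotv_sumr dotvC dotv_sumr; apply: eq_bigr => i _.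
by rewrite dotvZr dotvZr dotv_iter dotvC.
Qed.

Lemma polyapply_widen (p : {poly R}) B x N : (size p <= N)%N ->
  polyapply p B x = \sum_(i < N) p`_i *: iter i (mulmx B) x.
Proof.
move=> H; rewrite /polyapply (big_ord_widen N (fun i => p`_i *: iter i (mulmx B) x) H).
rewrite big_mkcond; apply: eq_bigr => i _; case: ifP => // /negbT.
by rewrite -leqNgt => /(nth_default 0) ->; rewrite scale0r.
Qed.

Lemma orth_monic B s u x (q : {poly R}) :
  orth_krylov B s u x -> q \is monic -> size q = s.+1 ->
  dotv (polyapply q B u) x = dotv (iter s (mulmx B) u) x.
Proof.
move=> Ho Hm Hs; rewrite (polyapply_widen (p:=q) B u (leqnn (size q))) Hs big_ord_recr /=.
rewrite dotvDl dotvC dotv_sumr big1 ?add0r.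
  move: Hm; rewrite monicE lead_coefE Hs /= => /eqP ->.
  by rewrite scale1r dotvC.
by move=> i _; rewrite dotvZr dotvC Ho ?mulr0.
Qed.

Lemma iter_mulmx B i (X : 'cV[R]_n) :
  iter i (mulmx B) X = iter i (mulmx B) 1%:M *m X.
Proof. by elim: i => [|i IH] /=; rewrite ?mul1mx // IH mulmxA. Qed.

End Aux.
Section Ex.
Variables (R : realType) (n : nat).
Implicit Types (u w x y : 'cV[R]_n) (B : 'M[R]_n).

Lemma gram_solve (s : nat) (K : 'M[R]_(n, s)) (y : 'cV[R]_n) :
  exists c : 'cV[R]_s, K^T *m (y - K *m c) = 0.
Proof.
set G := K^T *m K.
have kerS : (kermx G <= kermx K^T)%MS.
  apply/sub_kermxP; set X := kermx G.
  have XG : X *m G = 0 := mulmx_ker G.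
  set Y := X *m K^T.
  have YY : Y *m Y^T = 0.
    by rewrite /Y trmx_mul trmxK mulmxA -(mulmxA X) -/G XG mul0mx.
  rewrite -/Y; apply/matrixP => i j; rewrite [RHS]mxE.
  have : (Y *m Y^T) i i = 0 by rewrite YY mxE.
  rewrite mxE => H.
  have Hp : forall k, predT k -> 0 <= Y i k * Y^T k i.
    by move=> k _; rewrite [Y^T _ _]mxE -expr2 sqr_ge0.
  have /eqP := psumr_eq0P Hp H (isT : predT j).
  by rewrite [Y^T _ _]mxE mulf_eq0 orbb => /eqP.
have rk : (\rank K <= \rank G)%N.
  have := mxrankS kerS; rewrite !mxrank_ker mxrank_tr.
  have := rank_leq_row G; have := rank_leq_col K; lia.
have sGK : (G <= K)%MS by apply: submxMl.
have sKG : (K <= G)%MS by rewrite -(geq_leqif (mxrank_leqif_sup sGK)).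
have /submxP [D HD] : (y^T *m K <= G)%MS by apply: submx_trans (submxMl _ _) sKG.
exists D^T.
have GT : G^T = G by rewrite /G trmx_mul trmxK.
rewrite mulmxBr mulmxA -/G.
have -> : K^T *m y = (y^T *m K)^T by rewrite trmx_mul trmxK.
by rewrite HD trmx_mul GT subrr.
Qed.

Lemma Ps_exists B s u : exists p, is_Ps B s u p.
Proof.
pose K : 'M[R]_(n, s) := \matrix_(i, j) (iter j (mulmx B) u) i 0.
have [c Hc] := gram_solve K (iter s (mulmx B) u).
pose cf : nat -> R := fun j => if @insub _ (fun k => (k < s)%N) 'I_s j is Some k then c k 0 else 0.
have cfE : forall i : 'I_s, cf i = c i 0 by move=> i; rewrite /cf valK.
pose p : {poly R} := 'X^s - \poly_(j < s) cf j.
have Hsz : size p = s.+1.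
  rewrite /p size_polyDl size_polyXn // size_polyN ltnS; exact: size_poly.
have Hcoef : forall i, p`_i = (i == s)%:R - (if (i < s)%N then cf i else 0).
  by move=> i; rewrite /p coefB coefXn coef_poly.
have Happ : polyapply p B u = iter s (mulmx B) u - K *m c.
  rewrite (polyapply_widen (p:=p) (N:=s.+1) B u) ?Hsz // big_ord_recr /= Hcoef eqxx ltnn subr0 scale1r addrC.
  congr (_ + _); apply/matrixP => k l; rewrite (ord1 l) !mxE summxE -sumrN.
  apply: eq_bigr => i _; rewrite Hcoef (ltn_eqF (ltn_ord i)) ltn_ord sub0r !mxE cfE.
  by rewrite mulNr mulrC.
exists p; split => //.
  by rewrite monicE lead_coefE Hsz /= Hcoef eqxx ltnn subr0.
move=> j hj; rewrite Happ.
have := congr1 (fun M : 'cV[R]_s => M (Ordinal hj) 0) Hc.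
rewrite !mxE /= => <-; rewrite dotvE; apply: eq_bigr => i _.
by congr (_ * _); rewrite !mxE.
Qed.

Lemma Ps_spec B s u : is_Ps B s u (Ps B s u).
Proof.
rewrite /Ps; case: pselect => [e|ne]; first exact: proj2_sig (cid e).
by exfalso; apply: ne; apply: Ps_exists.
Qed.

End Ex.
Section Step.
Variables (R : realType) (n : nat).
Implicit Types (u w x y : 'cV[R]_n) (B : 'M[R]_n).

Lemma step B s u (q : {poly R}) : q \is monic -> size q = s.+1 ->
  enorm (polyapply (Ps B s u) B u) =
  dotv (polyapply q B^T (normalize (polyapply (Ps B s u) B u))) u.
Proof.
move=> Hqm Hqs; have [Hm Hs Ho] := Ps_spec B s u.
set y := polyapply _ B u; set w := normalize y.
have Hw : orth_krylov B s u w by move=> j hj; rewrite /w /normalize dotvZr Ho // mulr0.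
rewrite -dotv_normalize -/w dotvC (orth_monic Hw Hm Hs) -(orth_monic Hw Hqm Hqs).
by rewrite dotvC dotv_polyapply.
Qed.

Lemma entry_le1 x i : dotv x x <= 1 -> `|x i 0| <= 1.
Proof.
move=> H.
have h2 : x i 0 ^+ 2 <= dotv x x.
  rewrite dotvE (bigD1 i) //= expr2 lerDl.
  by apply: sumr_ge0 => k _; rewrite -expr2 sqr_ge0.
have : `|x i 0| ^+ 2 <= 1 by rewrite real_normK ?num_real //; apply: le_trans H.
have := normr_ge0 (x i 0); set a := `|x i 0|; move=> ? ?; nra.
Qed.

Lemma bound_iter (A : 'M[R]_n) s v w : dotv v v <= 1 -> dotv w w <= 1 ->
  dotv (iter s (mulmx A) v) w <= \sum_i \sum_j `|iter s (mulmx A) 1%:M i j|.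
Proof.
move=> Hv Hw; rewrite iter_mulmx dotvE; set M := iter s (mulmx A) 1%:M.
apply: le_trans (ler_norm _) _; apply: le_trans (ler_norm_sum _ _ _) _.
apply: ler_sum => i _; rewrite mxE normrM.
apply: le_trans (ler_wpM2r (normr_ge0 _) (ler_norm_sum _ _ _)) _.
rewrite mulr_suml; apply: ler_sum => j _; rewrite normrM -mulrA.
rewrite -[X in _ <= X]mulr1 ler_wpM2l //.
by apply: mulr_ile1 => //; apply: entry_le1.
Qed.

Lemma grade_le (A : 'M[R]_n) x k : annihilated_deg A x k -> (grade A x <= k)%N.
Proof.
move=> H; rewrite /grade /min_annih_deg; case: pselect => [e|ne] //.
by case: ex_minnP => m _ Hm; apply: Hm; apply/asboolP.
Qed.

End Step.
Unset Implicit Arguments. Set Strict Implicit.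
Theorem theorem3p4 (R : realType) (n : nat) (A : 'M[R]_n) (s : nat)
  (v0 : 'cV[R]_n) :
  (1 <= s)%N -> (s < minpoly_deg A)%N ->
  enorm v0 = 1 -> (s.+1 <= grade A v0)%N ->
  (fun k => enorm (aci_w A s v0 k.+1 - aci_w A s v0 k)) @ \oo --> (0 : R) /\
  (fun k => enorm (aci_v A s v0 k.+1 - aci_v A s v0 k)) @ \oo --> (0 : R).
Proof.
move=> _ _ Hv0 Hgr.
set v := aci_v A s v0; set w := aci_w A s v0.
pose y k := polyapply (Ps A s (v k)) A (v k).
pose z k := polyapply (Ps A^T s (w k)) A^T (w k).
pose a k := enorm (y k); pose b k := enorm (z k).
have vS k : v k.+1 = normalize (z k) by [].
have wE k : w k = normalize (y k) by [].
have F1 k : a k = b k * dotv (v k.+1) (v k).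
  have [Hm Hs _] := Ps_spec A^T s (w k).
  rewrite /a (@step _ _ A s (v k) _ Hm Hs) -/(y k) -wE -/(z k) -{1}(normalizeK (z k)) -vS.
  by rewrite dotvZl.
have F2 k : b k = a k.+1 * dotv (w k.+1) (w k).
  have [Hm Hs _] := Ps_spec A s (v k.+1).
  rewrite /b (@step _ _ A^T s (w k) _ Hm Hs) -/(z k) -vS trmxK -/(y k.+1).
  by rewrite -{1}(normalizeK (y k.+1)) -wE dotvZl.
have Uv k : dotv (v k) (v k) <= 1.
  case: k => [|k]; last by rewrite vS dotv_normalize_le1.
  by rewrite /v /= -enorm_sq Hv0 expr1n.
have Uw k : dotv (w k) (w k) <= 1 by rewrite wE dotv_normalize_le1.
have ab k : a k <= b k.
  rewrite F1 -[X in _ <= X]mulr1 ler_wpM2l ?enorm_ge0 //; exact: dotv_le1.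
have ba k : b k <= a k.+1.
  rewrite F2 -[X in _ <= X]mulr1 ler_wpM2l ?enorm_ge0 //; exact: dotv_le1.
have a0 : 0 < a 0.
  rewrite lt0r enorm_ge0 andbT; apply/eqP => /enorm_eq0 H0.
  have := Ps_spec A s (v 0) => -[Hm Hs _].
  have : (grade A v0 <= s)%N by apply: grade_le; exists (Ps A s (v 0)); split.
  by rewrite leqNgt Hgr.
have age k : a 0 <= a k.
  elim: k => [//|k IH]; apply: le_trans IH _; exact: le_trans (ab k) (ba k).
have Uw1 k : dotv (w k) (w k) = 1.
  rewrite wE dotv_normalize_self; case: eqP => // H.
  by move: (age k); rewrite /a H; move: a0; rewrite lt_leAnge => /andP[_ /negP].
have Uv1 k : dotv (v k) (v k) = 1.
  case: k => [|k]; first by rewrite /v /= -enorm_sq Hv0 expr1n.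
  rewrite vS dotv_normalize_self; case: eqP => // H.
  have := le_trans (age k) (ab k); rewrite /b H => H'.
  exfalso; have := a0; move: H'; lra.
set C := \sum_i \sum_j `|iter s (mulmx A) 1%:M i j|.
have aC k : a k <= C.
  have [Hm Hs Ho] := Ps_spec A s (v k).
  have Hw : orth_krylov A s (v k) (w k).
    by move=> j hj; rewrite wE /normalize dotvZr Ho // mulr0.
  rewrite /a -dotv_normalize -wE dotvC (orth_monic Hw Hm Hs).
  exact: bound_iter.
have Ha : a x @[x --> \oo] --> sup (range a).
  apply: nondecreasing_cvgn; first by apply/nondecreasing_seqP => k; exact: le_trans (ab k) (ba k).
  by exists C => _ [k _ <-].
set l := sup (range a).
have key : forall e : R, 0 < e -> exists N, forall k, (N <= k)%N -> a k.+1 - a k < e.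
  move=> e he; have /cvgrPdist_lt Hl := Ha.
  have [N _ HN] := Hl (e / 2) (divr_gt0 he (ltr0Sn _ 1)).
  exists N => k hk.
  have h1 := HN k hk; have h2 := HN k.+1 (leqW hk); move: h1 h2 => /= h1 h2.
  have h3 : l - a k <= `|l - a k| := ler_norm _.
  have h4 : a k.+1 - l <= `|l - a k.+1| by rewrite distrC ler_norm.
  lra.
have fin : forall f : nat -> R, (forall k, 0 <= f k) ->
    (forall k, a 0 * f k ^+ 2 <= 2 * (a k.+1 - a k)) -> f x @[x --> \oo] --> (0 : R).
  move=> f f0 fb; apply/cvgr0Pnorm_lt => e he.
  have he2 : 0 < e ^+ 2 * a 0 / 2 by rewrite divr_gt0 // mulr_gt0 // exprn_gt0.
  have [N HN] := key _ he2.
  exists N => // k /= hk; rewrite ger0_norm //.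
  have := HN k hk; have := fb k; have := f0 k => h0 hb hN.
  have : f k ^+ 2 < e ^+ 2.
    rewrite -(ltr_pM2l a0); apply: le_lt_trans hb _; nra.
  have := he; move=> *; nra.
split.
  apply: fin => [k|k]; first exact: enorm_ge0.
  rewrite enorm_sq dist_sq !Uw1 dotvC.
  have := F2 k; have := ab k; have := ba k; have := age k.+1; have := dotv_le1 (Uw k) (Uw k.+1).
  set c := dotv (w k) (w k.+1); rewrite (dotvC (w k.+1)) -/c.
  move=> *; nra.
apply: fin => [k|k]; first exact: enorm_ge0.
rewrite enorm_sq dist_sq !Uv1 dotvC.
have := F1 k; have := ab k; have := ba k; have := age k; have := dotv_le1 (Uv k) (Uv k.+1).
set c := dotv (v k) (v k.+1); rewrite (dotvC (v k.+1)) -/c.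
move=> *; nra.
Qed.
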